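(* Let $\mathbf{k}$ be a commutative domain of characteristic zero, and let $\omega=xy-(\phi(x)+y\psi(x))\in\mathcal{T}$ with $\phi,\psi\in\mathbf{k}[x]$. The following are equivalent: (a) for every commutative Rota-Baxter $\mathbf{k}$-algebra $(R,P)$ of weight $0$, the $\omega$-cover $\widetilde{P}$ of $P$ on the Hurwitz series algebra $(R^{\mathbb{N}},\partial_R)$ of weight $0$ is again a Rota-Baxter operator of weight $0$; (b) $\omega\in\mathcal{T}_0:=\{xy-a_0\mid a_0\in\mathbf{k}\}\cup\{xy-(b_0y+yx)\mid b_0\in\mathbf{k}\}$.
   Context: All algebras are commutative $\mathbf{k}$-algebras with identity. $\mathbf{k}\langle x,y\rangle$ is the noncommutative polynomial algebra and $\mathcal{T}:=\{xy-(\phi(x)+y\psi(x))\mid \phi,\psi\in\mathbf{k}[x]\}$. For $\lambda\in\mathbf{k}$, a Rota-Baxter operator of weight $\lambda$ on an algebra $R$ is a $\mathbf{k}$-linear $P:R\to R$ with $P(x)P(y)=P(P(x)y)+P(xP(y))+\lambda P(xy)$ for all $x,y\in R$. For an algebra $R$, $R^{\mathbb{N}}$ is the set of sequences $f=(f_n)_{n\in\mathbb N}$ in $R$ with componentwise module structure and the $\lambda$-Hurwitz product $(fg)_n=\sum_{k=0}^{n}\sum_{j=0}^{n-k}\binom{n}{k}\binom{n-k}{j}\lambda^k f_{n-j}g_{k+j}$ (for $\lambda=0$: $(fg)_n=\sum_{j=0}^n\binom{n}{j}f_{n-j}g_j$); $\partial_R:R^{\mathbb N}\to R^{\mathbb N}$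 is $(\partial_R f)_n=f_{n+1}$. Write $\phi(x)=\sum_{i=0}^r a_ix^i$, $\psi(x)=\sum_{j=0}^s b_jx^j$. Given a linear operator $P$ on $R$, the $\omega$-cover of $P$ is the unique linear operator $\widetilde P$ on $R^{\mathbb N}$ with $\widetilde P(f)_0=P(f_0)$ and $\partial_R\widetilde P=\phi(\partial_R)+\widetilde P\psi(\partial_R)$; equivalently, writing $\widetilde P_n(f):=\widetilde P(f)_n$, for all $n\ge1$: $\widetilde P_n(f)=\sum_{i=0}^r a_i f_{n-1+i}+\sum_{j=0}^s b_j\widetilde P_{n-1}(\partial_R^j f)$. *)

(* Defs.v *)
From HB Require Import structures.
From mathcomp Require Import all_boot all_order all_algebra.
Set Implicit Arguments. Unset Strict Implicit. Unset Printing Implicit Defensive.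
Import Order.TTheory GRing.Theory Num.Theory.
Local Open Scope ring_scope.

Definition is_RB0 (k : idomainType) (R : comAlgType k) (P : R -> R) : Prop :=
  (forall (a : k) (x y : R), P (a *: x + y) = a *: P x + P y) /\
  (forall x y : R, P x * P y = P (P x * y) + P (x * P y)).

Definition hmul0 (k : idomainType) (R : comAlgType k) (f g : nat -> R) : nat -> R :=
  fun n => \sum_(j < n.+1) ('C(n, j))%:R * (f (n - j)%N * g j).

Fixpoint omega_cover (k : idomainType) (R : comAlgType k) (phi psi : {poly k})
    (P : R -> R) (f : nat -> R) (n : nat) {struct n} : R :=
  match n with
  | 0 => P (f 0%N)
  | n'.+1 =>
      \sum_(i < size phi) phi`_i *: f (n' + i)%N
      + \sum_(j < size psi) psi`_j *:
          omega_cover phi psi P (fun m => f (m + j)%N) n'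
  end.

Definition is_RB0_hurwitz (k : idomainType) (R : comAlgType k)
    (Q : (nat -> R) -> (nat -> R)) : Prop :=
  (forall (a : k) (f g : nat -> R) (n : nat),
      Q (fun m => a *: f m + g m) n = a *: Q f n + Q g n) /\
  (forall (f g : nat -> R) (n : nat),
      hmul0 (Q f) (Q g) n = Q (hmul0 (Q f) g) n + Q (hmul0 f (Q g)) n).

(* omega = xy - (phi(x) + y psi(x)) lies in T_0 =
   {xy - a0} u {xy - (b0 y + y x)} *)
Definition in_T0 (k : idomainType) (phi psi : {poly k}) : Prop :=
  (exists a0 : k, phi = a0%:P /\ psi = 0) \/
  (exists b0 : k, phi = 0 /\ psi = b0%:P + 'X).

(* Main.v *)
Require Import Defs.
From HB Require Import structures.
From mathcomp Require Import all_boot all_order all_algebra.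
From Stdlib Require Import FunctionalExtensionality.
From mathcomp Require Import ring zify.
Import GRing.Theory.
Local Open Scope ring_scope.
Set Implicit Arguments. Unset Strict Implicit. Unset Printing Implicit Defensive.

Section Seq.
Variable (k : idomainType) (R : comAlgType k).
Implicit Types f g h : nat -> R.

Definition Dsh f : nat -> R := fun m => f m.+1.

Lemma hmul0C f g n : hmul0 f g n = hmul0 g f n.
Proof.
rewrite /hmul0 (reindex_inj rev_ord_inj) /=; apply: eq_bigr => j _.
have hj : (j <= n)%N by rewrite -ltnS.
by rewrite subSS subKn // bin_sub // [f j * _]mulrC.
Qed.

Lemma hmul0Dl f1 f2 g n :
  hmul0 (fun m => f1 m + f2 m) g n = hmul0 f1 g n + hmul0 f2 g n.
Proof. by rewrite /hmul0 -big_split; apply: eq_bigr => j _; rewrite mulrDl mulrDr. Qed.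

Lemma hmul0Ml r f g n : hmul0 (fun m => r * f m) g n = r * hmul0 f g n.
Proof.
rewrite /hmul0 mulr_sumr; apply: eq_bigr => j _.
by rewrite /=; ring.
Qed.

Lemma hmul0Zl a f g n : hmul0 (fun m => a *: f m) g n = a *: hmul0 f g n.
Proof.
rewrite -mulr_algl -hmul0Ml; congr hmul0; apply: functional_extensionality => m.
by rewrite mulr_algl.
Qed.

Lemma hmul0Dr f g1 g2 n :
  hmul0 f (fun m => g1 m + g2 m) n = hmul0 f g1 n + hmul0 f g2 n.
Proof. by rewrite hmul0C hmul0Dl !(hmul0C f). Qed.

Lemma hmul0Mr r f g n : hmul0 f (fun m => r * g m) n = r * hmul0 f g n.
Proof. by rewrite hmul0C hmul0Ml hmul0C. Qed.

Lemma hmul0Zr a f g n : hmul0 f (fun m => a *: g m) n = a *: hmul0 f g n.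
Proof. by rewrite hmul0C hmul0Zl hmul0C. Qed.

Lemma hmul00l g n : hmul0 (fun _ => 0) g n = 0.
Proof. by rewrite /hmul0 big1 // => j _; rewrite mul0r mulr0. Qed.

Lemma hmul0N f g n : hmul0 f g n =
  \sum_(0 <= j < n.+1) ('C(n, j))%:R * (f (n - j)%N * g j).
Proof. by rewrite big_mkord. Qed.

Lemma leibniz f g n : hmul0 f g n.+1 = hmul0 (Dsh f) g n + hmul0 f (Dsh g) n.
Proof.
rewrite !hmul0N /Dsh big_nat_recl // bin0 subn0.
have -> : \sum_(0 <= i < n.+1) ('C(n.+1, i.+1))%:R * (f (n.+1 - i.+1)%N * g i.+1)
   = \sum_(0 <= i < n.+1) ('C(n, i.+1))%:R * (f (n - i)%N * g i.+1)
   + \sum_(0 <= i < n.+1) ('C(n, i))%:R * (f (n - i)%N * g i.+1).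
  rewrite -big_split; apply: eq_bigr => i _ /=.
  by rewrite binS natrD mulrDl subSS.
rewrite [in RHS]big_nat_recl // bin0 subn0 addrA; congr (_ + _).
rewrite big_nat_recr //= bin_small // mul0r addr0; congr (_ + _).
rewrite big_nat_cond [in RHS]big_nat_cond; apply: eq_bigr => i /andP [/andP [_ hi] _].
by rewrite subnS prednK // subn_gt0.
Qed.

Definition Eseq (x : R) : nat -> R := fun m => x ^+ m.

Lemma hmul0E x y n : hmul0 (Eseq x) (Eseq y) n = (x + y) ^+ n.
Proof.
rewrite exprDn /hmul0 /Eseq; apply: eq_bigr => j _.
by rewrite mulrC mulr_natr.
Qed.

Lemma hmul0_unitr f n : hmul0 f (Eseq 0) n = f n.
Proof.
rewrite /hmul0 big_ord_recl /= bin0 subn0 /Eseq expr0 mulr1 mul1r.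
by rewrite big1 ?addr0 // => i _; rewrite expr0n /= mulr0 mulr0.
Qed.

Lemma hmul0_unitl f n : hmul0 (Eseq 0) f n = f n.
Proof. by rewrite hmul0C hmul0_unitr. Qed.

End Seq.

Section Cover.
Variable (k : idomainType) (R : comAlgType k).
Variables (phi psi : {poly k}) (P : R -> R).
Implicit Types f g h : nat -> R.
Local Notation Q := (omega_cover phi psi P).

Lemma coverS f n : Q f n.+1 =
  \sum_(i < size phi) phi`_i *: f (n + i)%N
  + \sum_(j < size psi) psi`_j *: Q (fun m => f (m + j)%N) n.
Proof. by []. Qed.

Hypothesis Plin : forall (a : k) (x y : R), P (a *: x + y) = a *: P x + P y.

Lemma cover_lin n : forall a f g,
  Q (fun m => a *: f m + g m) n = a *: Q f n + Q g n.
Proof.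
elim: n => [|n IH] a f g; first by rewrite /= Plin.
rewrite !coverS.
have -> : \sum_(j < size psi) psi`_j *: Q (fun m => a *: f (m + j)%N + g (m + j)%N) n
   = \sum_(j < size psi) psi`_j *: (a *: Q (fun m => f (m + j)%N) n + Q (fun m => g (m + j)%N) n).
  by apply: eq_bigr => j _; rewrite (IH a (fun m => f (m + j)%N) (fun m => g (m + j)%N)).
rewrite scalerDr !scaler_sumr.
rewrite (eq_bigr (fun i : 'I_(size phi) => a *: (phi`_i *: f (n + i)%N) + phi`_i *: g (n+i)%N)); last first.
  by move=> i _; rewrite scalerDr !scalerA mulrC.
rewrite (eq_bigr (fun i : 'I_(size psi) => a *: (psi`_i *: Q (fun m => f (m + i)%N) n) + psi`_i *: Q (fun m => g (m + i)%N) n)); last first.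
  by move=> i _; rewrite scalerDr !scalerA mulrC.
rewrite !big_split /=; rewrite -!scaler_sumr; ring.
Qed.

Lemma P0 : P 0 = 0.
Proof. by have := Plin (-1) 0 0; rewrite scaler0 addr0 scaleN1r addNr. Qed.

Lemma cover0 n : Q (fun _ => 0) n = 0.
Proof.
have := cover_lin n (-1) (fun _ => 0) (fun _ => 0).
have -> : (fun _ : nat => -1 *: (0:R) + 0) = (fun _ => 0).
  by apply: functional_extensionality => m; rewrite scaler0 addr0.
by rewrite scaleN1r addNr.
Qed.

Lemma coverD n f g : Q (fun m => f m + g m) n = Q f n + Q g n.
Proof.
have := cover_lin n 1 f g.
have -> : (fun m => 1 *: f m + g m) = (fun m => f m + g m).
  by apply: functional_extensionality => m; rewrite scale1r.
by rewrite scale1r.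
Qed.

Lemma coverZ n a f : Q (fun m => a *: f m) n = a *: Q f n.
Proof.
have := cover_lin n a f (fun _ => 0).
have -> : (fun m => a *: f m + 0) = (fun m => a *: f m).
  by apply: functional_extensionality => m; rewrite addr0.
by rewrite cover0 addr0.
Qed.

Lemma coverN n f : Q (fun m => - f m) n = - Q f n.
Proof.
have -> : (fun m => - f m) = (fun m => (-1) *: f m).
  by apply: functional_extensionality => m; rewrite scaleN1r.
by rewrite coverZ scaleN1r.
Qed.

Lemma coverB n f g : Q (fun m => f m - g m) n = Q f n - Q g n.
Proof.
by rewrite (coverD n f (fun m => - g m)) coverN.
Qed.

Lemma cover_mulr (r : R) (Hr : forall x, P (r * x) = r * P x) n :
  forall f, Q (fun m => r * f m) n = r * Q f n.
Proof.
elim: n => [|n IH] f; first by rewrite /= Hr.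
rewrite !coverS mulrDr !mulr_sumr; congr (_ + _); apply: eq_bigr => i _.
  by rewrite scalerAr.
by rewrite (IH (fun m => f (m + i)%N)) scalerAr.
Qed.

End Cover.
Arguments cover_lin {k R phi psi P}.
Arguments coverD {k R phi psi P}.
Arguments coverZ {k R phi psi P}.
Arguments coverN {k R phi psi P}.
Arguments coverB {k R phi psi P}.
Arguments cover0 {k R phi psi P}.
Arguments cover_mulr {k R phi psi P r}.
Arguments coverS {k R phi psi P}.

Section BA.
Variable (k : idomainType) (R : comAlgType k).
Implicit Types f g h : nat -> R.

Lemma hmul0_0 f g : hmul0 f g 0 = f 0%N * g 0%N.
Proof. by rewrite /hmul0 big_ord1 /= bin0 mul1r. Qed.

Lemma sum_polyC (c : k) (F : nat -> R) :
  \sum_(i < size c%:P) c%:P`_i *: F i = c *: F 0%N.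
Proof.
rewrite size_polyC; case: eqP => [->|_]; first by rewrite big_ord0 scale0r.
by rewrite big_ord1 coefC.
Qed.

Lemma sum_poly0 (F : nat -> R) : \sum_(i < size (0 : {poly k})) (0:{poly k})`_i *: F i = 0.
Proof. by rewrite size_poly0 big_ord0. Qed.

Lemma sum_polyXC (c : k) (F : nat -> R) :
  \sum_(i < size (c%:P + 'X)) (c%:P + 'X)`_i *: F i = c *: F 0%N + F 1%N.
Proof.
rewrite addrC size_XaddC big_ord_recl big_ord1 /= !coefD !coefX !coefC /=.
by rewrite add0r addr0 scale1r.
Qed.

Variable P : R -> R.
Hypothesis HP : is_RB0 P.

Lemma case1 (a0 : k) : is_RB0_hurwitz (omega_cover a0%:P 0 P).
Proof.
case: HP => Plin Prb.
split; first by move=> a f g n; apply: cover_lin.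
set Q := omega_cover a0%:P 0 P.
have QS : forall f n, Q f n.+1 = a0 *: f n.
  by move=> f n; rewrite /Q coverS (sum_polyC a0 (fun i => f (n + i)%N)) (sum_poly0 (fun i => omega_cover a0%:P 0 P (fun m => f (m + i)%N) n)) addr0 addn0.
have DQ : forall f, Dsh (Q f) = (fun m => a0 *: f m).
  by move=> f; apply: functional_extensionality => m; rewrite /Dsh QS.
move=> f g [|n].
  by rewrite !hmul0_0 /Q /= !hmul0_0 /= Prb.
rewrite leibniz !DQ hmul0Zl hmul0Zr !QS; ring.
Qed.

Lemma case2 (b0 : k) : is_RB0_hurwitz (omega_cover 0 (b0%:P + 'X) P).
Proof.
case: HP => Plin Prb.
split; first by move=> a f g n; apply: cover_lin.
set Q := omega_cover 0 (b0%:P + 'X) P.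
have QS : forall f n, Q f n.+1 = b0 *: Q f n + Q (Dsh f) n.
  move=> f n; rewrite /Q coverS (sum_poly0 (fun i => f (n + i)%N)) add0r (sum_polyXC b0 (fun i => omega_cover 0 (b0%:P + 'X) P (fun m => f (m + i)%N) n)).
  have -> : (fun m => f (m + 0)%N) = f by apply: functional_extensionality => m; rewrite addn0.
  by have -> : (fun m => f (m + 1)%N) = Dsh f by apply: functional_extensionality => m; rewrite addn1.
have DQ : forall f, Dsh (Q f) = (fun m => b0 *: Q f m + Q (Dsh f) m).
  by move=> f; apply: functional_extensionality => m; rewrite /Dsh QS.
have Dm : forall f g, Dsh (hmul0 f g) = (fun m => hmul0 (Dsh f) g m + hmul0 f (Dsh g) m).
  by move=> f g; apply: functional_extensionality => m; rewrite /Dsh leibniz.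
pose X f g n := hmul0 (Q f) (Q g) n - Q (hmul0 (Q f) g) n - Q (hmul0 f (Q g)) n.
suff H : forall n f g, X f g n = 0.
  by move=> f g n; apply/eqP; rewrite -subr_eq0 opprD addrA; apply/eqP; apply: H.
elim=> [|n IH] f g.
  by rewrite /X !hmul0_0 /Q /= !hmul0_0 /= Prb; ring.
have E1 : X f g n.+1 = b0 *: X f g n + b0 *: X f g n + X (Dsh f) g n + X f (Dsh g) n.
  rewrite /X leibniz !DQ hmul0Dl hmul0Dr hmul0Zl hmul0Zr !QS !Dm.
  rewrite !DQ.
  have -> : (fun m => hmul0 (fun m0 => b0 *: Q f m0 + Q (Dsh f) m0) g m + hmul0 (Q f) (Dsh g) m)
     = (fun m => b0 *: hmul0 (Q f) g m + (fun m => hmul0 (Q (Dsh f)) g m + hmul0 (Q f) (Dsh g) m) m).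
    by apply: functional_extensionality => m; rewrite hmul0Dl hmul0Zl addrA.
  have -> : (fun m => hmul0 (Dsh f) (Q g) m + hmul0 f (fun m0 => b0 *: Q g m0 + Q (Dsh g) m0) m)
     = (fun m => b0 *: hmul0 f (Q g) m + (fun m => hmul0 (Dsh f) (Q g) m + hmul0 f (Q (Dsh g)) m) m).
    by apply: functional_extensionality => m; rewrite hmul0Dr hmul0Zr; ring.
  rewrite /Q !(cover_lin Plin) !(coverD Plin).
  rewrite !scalerBr; ring.
by rewrite E1 !IH scaler0 !addr0.
Qed.

End BA.

Section Zero.
Variable (k : idomainType) (R : comAlgType k).
Implicit Types f g h : nat -> R.

Fixpoint hs (x y : R) (m : nat) : R :=
  match m with 0 => 0 | m'.+1 => x ^+ m' + y * hs x y m' end.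

Lemma hs_mul x y m : (x - y) * hs x y m = x ^+ m - y ^+ m.
Proof.
elim: m => [|m IH] /=; first by rewrite mulr0 !expr0 subrr.
by rewrite mulrDr mulrCA IH !exprS; ring.
Qed.

Lemma hsE x y z m : hmul0 (hs x y) (Eseq z) m = hs (x + z) (y + z) m.
Proof.
elim: m => [|m IH]; first by rewrite /hmul0 big_ord1 /= mul0r mulr0.
rewrite leibniz.
have -> : Dsh (hs x y) = (fun m => Eseq x m + y * hs x y m) by [].
have -> : Dsh (Eseq z) = (fun m => z * Eseq z m).
  by apply: functional_extensionality => i; rewrite /Dsh /Eseq exprS.
rewrite hmul0Dl hmul0Ml hmul0Mr hmul0E IH /=; ring.
Qed.

Definition peval (p : {poly k}) (x : R) : R := \sum_(i < size p) p`_i *: x ^+ i.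

Definition Phi (p : {poly k}) (x y : R) : R := \sum_(i < size p) p`_i *: hs x y i.

Lemma Phi_mul p x y : (x - y) * Phi p x y = peval p x - peval p y.
Proof.
rewrite /Phi /peval mulr_sumr -sumrB; apply: eq_bigr => i _.
by rewrite -scalerAr hs_mul scalerBr.
Qed.

Variables (phi psi : {poly k}).
Local Notation Q := (omega_cover phi psi (fun _ : R => 0)).

Lemma cover_E0 nu n : Q (Eseq nu) n = peval phi nu * hs nu (peval psi nu) n.
Proof.
elim: n => [|n IH]; first by rewrite /= mulr0.
rewrite coverS.
have -> : \sum_(j < size psi) psi`_j *: Q (fun m => Eseq nu (m + j)%N) n
   = peval psi nu * Q (Eseq nu) n.
  rewrite /peval mulr_suml; apply: eq_bigr => j _.
  have -> : (fun m => Eseq nu (m + j)%N) = (fun m => nu ^+ j * Eseq nu m).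
    by apply: functional_extensionality => m; rewrite /Eseq exprD mulrC.
  by rewrite (cover_mulr (P := fun _ : R => 0)) ?scalerAl // => x; rewrite mulr0.
have -> : \sum_(i < size phi) phi`_i *: Eseq nu (n + i)%N = peval phi nu * nu ^+ n.
  by rewrite /peval mulr_suml; apply: eq_bigr => i _; rewrite /Eseq exprD mulrC scalerAl.
rewrite IH /=; ring.
Qed.

Lemma qcover1 h : Q h 1 = \sum_(i < size phi) phi`_i *: h i.
Proof.
rewrite coverS /= [X in _ + X]big1 ?addr0; last by move=> j _; rewrite scaler0.
by apply: eq_bigr => i _; rewrite add0n.
Qed.

Lemma qcover2 h : Q h 2 = \sum_(i < size phi) phi`_i *: h i.+1
   + \sum_(j < size psi) psi`_j *: \sum_(i < size phi) phi`_i *: h (i + j)%N.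
Proof.
rewrite coverS; congr (_ + _); apply: eq_bigr => j _.
by rewrite qcover1.
Qed.

End Zero.
Arguments qcover1 {k R phi psi}.
Arguments qcover2 {k R phi psi}.
Arguments cover_E0 {k R phi psi}.

Section Gen.
Variable (k : idomainType) (R : comAlgType k).
Implicit Types f g h : nat -> R.

Lemma hmul0_1 f g : hmul0 f g 1 = f 1%N * g 0%N + f 0%N * g 1%N.
Proof. by rewrite /hmul0 big_ord_recr big_ord1 /= bin0 bin1 !mul1r. Qed.

Lemma hmul0_2 f g : hmul0 f g 2 = f 2%N * g 0%N + (f 1%N * g 1%N) *+ 2 + f 0%N * g 2%N.
Proof.
rewrite /hmul0 big_ord_recr big_ord_recr big_ord1 /= bin0 binn !mul1r.
by rewrite mulr_natl.
Qed.

Lemma hmul0_3 f g : hmul0 f g 3 =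
  f 3%N * g 0%N + (f 2%N * g 1%N) *+ 3 + (f 1%N * g 2%N) *+ 3 + f 0%N * g 3%N.
Proof.
rewrite /hmul0 big_ord_recr big_ord_recr big_ord_recr big_ord1 /= bin0 binn !mul1r.
by rewrite !mulr_natl.
Qed.

Lemma Phi_scal (p : {poly k}) (r x y : R) :
  \sum_(i < size p) p`_i *: (r * hs x y i) = r * Phi p x y.
Proof. by rewrite /Phi mulr_sumr; apply: eq_bigr => i _; rewrite scalerAr. Qed.

Lemma peval_X1 (p : {poly k}) (x : R) :
  \sum_(i < size p) p`_i *: x ^+ i.+1 = x * peval p x.
Proof. by rewrite /peval mulr_sumr; apply: eq_bigr => i _; rewrite exprS scalerAr. Qed.

End Gen.

Section PolyFacts.
Variable k : idomainType.
Hypothesis hchar : [pchar k] =i pred0.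

Lemma peval_comp (p q : {poly k}) : peval p q = p \Po q.
Proof. by rewrite comp_polyE. Qed.

Lemma natr_poly_eq0 n : (n%:R == 0 :> {poly k}) = (n == 0%N).
Proof.
have : [pchar {poly k}] =i pred0 by move=> x; rewrite pchar_poly hchar.
by move/pcharf0P => ->.
Qed.

Lemma natr_k_eq0 n : (n%:R == 0 :> k) = (n == 0%N).
Proof. by move: n; apply/pcharf0P. Qed.

Lemma hsXC (c : k) m :
  (size (hs 'X ('X + c%:P) m) <= m)%N /\ (hs 'X ('X + c%:P) m)`_m.-1 = m%:R.
Proof.
elim: m => [|m [IH1 IH2]]; first by rewrite /= size_poly0 coef0.
split.
  rewrite /=; apply: leq_trans (size_polyD _ _) _; rewrite geq_max size_polyXn leqnn /=.
  apply: leq_trans (size_polyMleq _ _) _; rewrite size_XaddC.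
  by rewrite (_ : (2 + _).-1 = (size (hs 'X ('X + c%:P) m)).+1) // ltnS.
rewrite /= coefD coefXn eqxx mulrDl coefD coefXM coefCM.
rewrite [_`_m](nth_default _ IH1) mulr0 addr0.
case: m IH1 IH2 => [|m] IH1 IH2 /=; first by rewrite addr0.
by rewrite IH2 nat1r.
Qed.

Lemma PhiXC (p : {poly k}) (c : k) : (2 <= size p)%N ->
  (size (Phi p 'X ('X + c%:P)) <= (size p).-1)%N /\ Phi p 'X ('X + c%:P) != 0.
Proof.
move=> hp; have [n Hn] : exists n, size p = n.+2.
  by exists (size p).-2; case: (size p) hp => [|[|s]].
split.
  rewrite /Phi; elim/big_ind: _ => //.
  - by rewrite size_poly0.
  - by move=> x y hx hy; apply: leq_trans (size_polyD _ _) _; rewrite geq_max hx hy.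
  move=> i _; apply: leq_trans (size_scale_leq _ _) _.
  case: (hsXC c i) => h _; apply: leq_trans h _.
  by rewrite -ltnS prednK ?ltn_ord // Hn.
apply/eqP => H0.
have : (Phi p 'X ('X + c%:P))`_n = 0 by rewrite H0 coef0.
rewrite /Phi coef_sum Hn big_ord_recr /= big1 ?add0r; last first.
  move=> i _; rewrite coefZ; case: (hsXC c i) => h _.
  by rewrite (nth_default _ (leq_trans h _)) ?mulr0 // -ltnS.
rewrite coefZ; case: (hsXC c n.+1) => _ /= ->.
move/eqP; rewrite mulf_eq0 natr_k_eq0 /= orbF => /eqP hl.
have : lead_coef p != 0.
  by rewrite lead_coef_eq0 -size_poly_eq0 Hn.
by rewrite lead_coefE Hn /= hl eqxx.
Qed.

End PolyFacts.

Section Gen2.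
Variable (k : idomainType) (R : comAlgType k).

Lemma La (p : {poly k}) (r x y : R) :
  (x - y) * \sum_(i < size p) p`_i *: (r * hs x y i.+1)
  = r * (x * peval p x - y * peval p y).
Proof.
rewrite mulr_sumr -!peval_X1 -sumrB mulr_sumr; apply: eq_bigr => i _.
rewrite -scalerBr -!scalerAr; congr (_ *: _).
by rewrite mulrCA hs_mul.
Qed.

Lemma Lb (p q : {poly k}) (r x y : R) :
  (x - y) * \sum_(j < size q) q`_j *: \sum_(i < size p) p`_i *: (r * hs x y (i + j)%N)
  = r * (peval q x * peval p x - peval q y * peval p y).
Proof.
have inner : forall j, (x - y) * \sum_(i < size p) p`_i *: (r * hs x y (i + j)%N)
   = r * (x ^+ j * peval p x - y ^+ j * peval p y).
  move=> j; rewrite /peval !mulr_sumr -sumrB mulr_sumr; apply: eq_bigr => i _.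
  rewrite -!scalerAr -scalerBr -scalerAr; congr (_ *: _).
  rewrite mulrCA hs_mul !exprD; ring.
rewrite mulr_sumr.
under eq_bigr => j _ do rewrite -scalerAr inner.
set Px := peval p x; set Py := peval p y.
rewrite /peval !mulr_suml -sumrB mulr_sumr; apply: eq_bigr => j _.
by rewrite -!scalerAl -scalerBr -scalerAr.
Qed.

End Gen2.

Section Zero.
Variable k : idomainType.
Hypothesis hchar : [pchar k] =i pred0.
Variables phi psi : {poly k}.
Local Notation Q := (omega_cover phi psi (fun _ : {poly k} => 0)).
Hypothesis Hrb : forall (f g : nat -> {poly k}) n,
  hmul0 (Q f) (Q g) n = Q (hmul0 (Q f) g) n + Q (hmul0 f (Q g)) n.

Lemma Qz0 f : Q f 0 = 0. Proof. by []. Qed.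

Lemma LE nu : Q (Eseq nu) = fun m => (phi \Po nu) * hs nu (psi \Po nu) m.
Proof. by apply: functional_extensionality => m; rewrite cover_E0 !peval_comp. Qed.

Lemma hmulQE (nu z : {poly k}) : hmul0 (Q (Eseq nu)) (Eseq z)
   = fun m => (phi \Po nu) * hs (nu + z) ((psi \Po nu) + z) m.
Proof. by apply: functional_extensionality => m; rewrite LE hmul0Ml hsE. Qed.

Lemma hmulEQ (nu z : {poly k}) : hmul0 (Eseq z) (Q (Eseq nu))
   = fun m => (phi \Po nu) * hs (nu + z) ((psi \Po nu) + z) m.
Proof. by apply: functional_extensionality => m; rewrite hmul0C hmulQE. Qed.

Lemma step1 : (2 <= size phi)%N ->
  [/\ phi`_0 = 0, phi \Po psi = phi & psi != 'X].
Proof.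
move=> hp.
have H := Hrb (Eseq 0) (Eseq 'X) 1.
rewrite hmul0_1 !Qz0 mulr0 mul0r addr0 hmulQE in H.
have e0 : hmul0 (Eseq 0) (Q (Eseq 'X)) = Q (Eseq 'X).
  by apply: functional_extensionality => m; rewrite hmul0_unitl.
rewrite e0 LE !qcover1 !Phi_scal comp_polyXr comp_polyXr add0r !comp_poly0r in H.
rewrite [_ + 'X]addrC in H.
case: (PhiXC hchar (psi`_0) hp) => hsz hnz.
set B := Phi phi 'X ('X + (psi`_0)%:P) in H hsz hnz.
set A := Phi phi 'X psi in H.
have hA : A = 0.
  apply/eqP; apply/negPn/negP => hA.
  have e : phi * A = - ((phi`_0)%:P * B) by apply/eqP; rewrite -addr_eq0 addrC -H.
  have := congr1 (fun q : {poly k} => size q) e; rewrite /= size_polyN size_mul //; last first.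
    by rewrite -size_poly_eq0; case: (size phi) hp.
  move=> e2; have := size_polyMleq (phi`_0)%:P B; rewrite -e2.
  have := size_polyC_leq1 (phi`_0).
  have : (1 <= size A)%N by rewrite lt0n size_poly_eq0.
  move: hsz hp; rewrite -!subn1.
  set sB := size B; set sA := size A; set sp := size phi; set sC := size (_ %:P); lia.
rewrite hA mulr0 addr0 in H.
have h0 : phi`_0 = 0.
  by move/eqP: H; rewrite eq_sym mulf_eq0 (negbTE hnz) orbF polyC_eq0 => /eqP.
split => //.
  have := Phi_mul phi 'X psi; rewrite -/A hA mulr0 !peval_comp comp_polyXr.
  by move/eqP; rewrite eq_sym subr_eq0 => /eqP.
apply/eqP => hX; case: (PhiXC hchar 0 hp) => _; rewrite polyC0 addr0.
by move: hA; rewrite /A hX => ->; rewrite eqxx.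
Qed.

Lemma Plin0 : forall (a : k) (x y : {poly k}),
  (fun _ : {poly k} => 0) (a *: x + y) = a *: (fun _ : {poly k} => (0 : {poly k})) x + (fun _ => 0) y.
Proof. by move=> a x y /=; rewrite scaler0 addr0. Qed.

Lemma step2 : (2 <= size phi)%N -> phi`_0 = 0 -> phi \Po psi = phi -> psi \Po psi = 'X.
Proof.
move=> hp h0 hc.
have Z : Q (Eseq 0) = fun _ => 0.
  by rewrite LE; apply: functional_extensionality => m; rewrite comp_poly0r h0 polyC0 mul0r.
have H := Hrb (Eseq 0) (Eseq 'X) 2.
rewrite Z hmul00l in H.
have e1 : hmul0 (fun _ => 0) (Eseq 'X) = fun _ => (0 : {poly k}).
  by apply: functional_extensionality => m; rewrite hmul00l.
have e0 : hmul0 (Eseq 0) (Q (Eseq 'X)) = Q (Eseq 'X).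
  by apply: functional_extensionality => m; rewrite hmul0_unitl.
rewrite e1 e0 (cover0 Plin0) add0r in H.
rewrite [in X in _ = X]LE qcover2 comp_polyXr comp_polyXr in H.
have := La phi phi 'X psi; have := Lb phi psi phi 'X psi.
rewrite !peval_comp !comp_polyXr hc.
set S1 := \sum_(i < size phi) _; set S2 := \sum_(j < size psi) _.
move=> e2 e3.
have : ('X - psi) * (S1 + S2) = phi * (phi * ('X - (psi \Po psi))).
  by rewrite mulrDr e2 e3; ring.
rewrite -H mulr0 => /esym/eqP; rewrite !mulf_eq0 subr_eq0.
have -> : (phi == 0) = false by apply/negbTE; rewrite -size_poly_eq0; case: (size phi) hp.
by rewrite /= => /eqP.
Qed.

Lemma size2E (p : {poly k}) : size p = 2 -> p = (p`_0)%:P + (p`_1)%:P * 'X.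
Proof.
move=> hs; apply/polyP => i; rewrite coefD coefC coefCM coefX.
case: i => [|[|i]] /=; first by rewrite mulr0 addr0.
  by rewrite mulr1 add0r.
by rewrite mulr0 addr0 nth_default // hs.
Qed.

Lemma two_neq0 : (1 + 1 : k) != 0.
Proof. by rewrite -[1 + 1]/(2%:R) natr_k_eq0. Qed.

Lemma case_big : (2 <= size phi)%N -> False.
Proof.
move=> hp; case: (step1 hp) => h0 hc hX.
have hpp := step2 hp h0 hc.
have hs2 : size psi = 2.
  have := size_comp_poly psi psi; rewrite hpp size_polyX /=.
  move/esym/eqP; rewrite muln_eq1 andbb => /eqP h1.
  by case: (size psi) h1 => [|[|[|]]].
have ep := size2E hs2.
set b0 := psi`_0 in ep; set b1 := psi`_1 in ep.
have hb0 : psi \Po psi = b0%:P + b1%:P * psi.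
  transitivity ((b0%:P + b1%:P * 'X) \Po psi); first by rewrite -ep.
  by rewrite comp_polyD comp_polyM !comp_polyC comp_polyX.
have hb := hb0; rewrite hpp in hb; rewrite {1}ep in hb.
have c1 : b1 * b1 = 1.
  have := congr1 (fun q : {poly k} => q`_1) hb.
  by rewrite /= coefX coefD coefC coefCM coefD coefC coefCM coefX /= add0r add0r mulr1.
have c0 : b0 + b1 * b0 = 0.
  have := congr1 (fun q : {poly k} => q`_0) hb.
  by rewrite /= coefX coefD coefC coefCM coefD coefC coefCM coefX /= !mulr0 !addr0.
have hb1 : b1 = -1.
  have : (b1 - 1) * (b1 + 1) == 0 by rewrite mulrDr mulrBl c1 mul1r mulr1; apply/eqP; ring.
  rewrite mulf_eq0 subr_eq0 addr_eq0 => /orP [/eqP e1|/eqP //].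
  rewrite e1 mul1r in c0.
  have : (1 + 1) * b0 == 0 by rewrite mulrDl mul1r c0.
  rewrite mulf_eq0 (negbTE two_neq0) /= => /eqP e0.
  by move: hX; rewrite ep e0 e1 polyC0 add0r mul1r eqxx.
have H := Hrb (Eseq 'X) (Eseq 'X) 1.
rewrite hmul0_1 !Qz0 mulr0 mul0r addr0 hmulQE hmulEQ in H.
rewrite !qcover1 !Phi_scal comp_polyXr comp_polyXr in H.
have hP : Phi phi ('X + 'X) (psi + 'X) == 0.
  have : phi * Phi phi ('X + 'X) (psi + 'X) * (1 + 1) == 0.
    apply/eqP; transitivity (phi * Phi phi ('X + 'X) (psi + 'X) + phi * Phi phi ('X + 'X) (psi + 'X)); first by ring.
    by rewrite -H.
  rewrite !mulf_eq0.
  have -> : (phi == 0) = false by apply/negbTE; rewrite -size_poly_eq0; case: (size phi) hp.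
  rewrite /= => /orP [//|].
  by rewrite -polyC1 -polyCD polyC_eq0 (negbTE two_neq0).
have := Phi_mul phi ('X + 'X) (psi + 'X); rewrite (eqP hP) mulr0 !peval_comp.
have -> : psi + 'X = b0%:P by rewrite ep hb1 polyCN polyC1 mulN1r addrNK.
move/esym/eqP; rewrite subr_eq0 comp_polyCr => /eqP e.
have : size (phi \Po ('X + 'X)) = size phi.
  apply: size_comp_poly2.
  have -> : 'X + 'X = (1 + 1 : k)%:P * 'X by rewrite polyCD polyC1 mulrDl mul1r.
  by rewrite size_Cmul ?two_neq0 // size_polyX.
rewrite e => e2; have := size_polyC_leq1 phi.[b0]; rewrite e2.
by case: (size phi) hp => [|[|]].
Qed.

End Zero.
Arguments hmulQE {k phi psi}.
Arguments hmulEQ {k phi psi}.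
Arguments LE {k phi psi}.
Arguments Qz0 {k phi psi}.

Section One.
Variable k : idomainType.
Hypothesis hchar : [pchar k] =i pred0.
Variables phi psi : {poly k}.
Local Notation Q := (omega_cover phi psi (fun _ : {poly k} => 0)).
Hypothesis Hrb : forall (f g : nat -> {poly k}) n,
  hmul0 (Q f) (Q g) n = Q (hmul0 (Q f) g) n + Q (hmul0 f (Q g)) n.

Lemma Phi2 (x y : {poly k}) : size psi = 2 -> Phi psi x y = psi`_1 *: 1.
Proof.
by move=> h; rewrite /Phi h big_ord_recr big_ord1 /= scaler0 add0r expr0 mulr0 addr0.
Qed.

Lemma qcover2_one (h : nat -> {poly k}) : size phi = 1 ->
  Q h 2 = phi`_0 *: h 1%N + phi`_0 *: \sum_(j < size psi) psi`_j *: h j.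
Proof.
move=> h1; rewrite qcover2 h1 big_ord1; congr (_ + _).
rewrite scaler_sumr; apply: eq_bigr => j _; rewrite big_ord1 /= add0n.
by rewrite scalerA mulrC -scalerA.
Qed.

Lemma case_one_psi : size phi = 1 -> (size psi <= 1)%N.
Proof.
move=> h1.
have ep : phi = (phi`_0)%:P by apply: size1_polyC; rewrite h1.
set a0 := phi`_0 in ep.
have a0nz : a0 != 0.
  by apply/eqP => e; move: h1; rewrite ep e size_poly0.
have H := Hrb (Eseq 'X) (Eseq 0) 2.
rewrite hmulQE hmulEQ hmul0_2 !Qz0 mulr0 mul0r addr0 add0r in H.
rewrite !qcover2_one // !Phi_scal !LE /= in H.
rewrite !comp_polyXr [phi \Po 0]comp_poly0r -/a0 -ep !expr0 !mulr0 !addr0 !add0r in H.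
rewrite comp_poly0r [_ + 'X]addrC in H.
set A := Phi psi 'X psi in H; set B := Phi psi 'X ('X + (psi`_0)%:P) in H.
have hAB : A + B = 0.
  have : a0%:P * a0%:P * (A + B) == 0.
    apply/eqP; move: H; rewrite ep -!mul_polyC => H.
    have e : a0%:P * a0%:P * (A + B) = 
       (a0%:P * (a0%:P * 1) + a0%:P * (a0%:P * A) + (a0%:P * (a0%:P * 1) + a0%:P * (a0%:P * B)))
       - (a0%:P * 1 * (a0%:P * 1)) *+ 2 by ring.
    by rewrite e -H subrr.
  by rewrite !mulf_eq0 polyC_eq0 (negbTE a0nz) /= => /eqP.
case: (ltnP 1 (size psi)) => // hp.
case: (ltnP 2 (size psi)) => hp2.
-
  case: (PhiXC hchar (psi`_0) hp) => hsz _.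
  have e1 := Phi_mul psi 'X psi; rewrite -/A !peval_comp comp_polyXr in e1.
  have eA : A = - B by apply/eqP; rewrite -addr_eq0 hAB.
  have e2 : psi \Po psi = psi + ('X - psi) * B.
    rewrite eA in e1; transitivity (psi - (psi - (psi \Po psi))); first by ring.
    by rewrite -e1; ring.
  have s1 := size_comp_poly psi psi.
  have s2 : (size (psi + ('X - psi) * B)%R <= maxn (size psi) ((maxn 2 (size psi) + size B).-1))%N.
    apply: leq_trans (size_polyD _ _) _; rewrite geq_max leq_maxl /=.
    apply: leq_trans (size_polyMleq _ _) _; rewrite leq_max; apply/orP; right.
    have h := size_polyD 'X (- psi); rewrite size_polyN size_polyX in h.
    by rewrite -!subn1 leq_sub2r // leq_add2r.
  rewrite -e2 in s2.
  move: s1 s2 hsz hp2; set e := size (_ \Po _); set sp := size psi; set sB := size B.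
  rewrite -!subn1. nia.
-
  have hs2 : size psi = 2 by apply/eqP; rewrite eqn_leq hp hp2.
  move: hAB; rewrite /A /B !Phi2 // -scalerDl => /eqP; rewrite -mul_polyC mulr1 polyC_eq0.
  have hl : psi`_1 != 0.
    by have := lead_coef_eq0 psi; rewrite lead_coefE hs2 /= => ->; rewrite -size_poly_eq0 hs2.
  by rewrite -[psi`_1 + psi`_1]mulr2n -mulr_natr mulf_eq0 (negbTE hl) /= natr_k_eq0.
Qed.

Lemma case_one : size phi = 1 -> psi = 0.
Proof.
move=> h1; have hps := case_one_psi h1.
have ep : phi = (phi`_0)%:P by apply: size1_polyC; rewrite h1.
have eq : psi = (psi`_0)%:P by apply: size1_polyC.
set a0 := phi`_0 in ep; set b0 := psi`_0 in eq.
have a0nz : a0 != 0 by apply/eqP => e; move: h1; rewrite ep e size_poly0.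
have QS : forall (h : nat -> {poly k}) n, Q h n.+1 = a0 *: h n + b0 *: Q h n.
  move=> h n; rewrite coverS.
  have -> : \sum_(i < size phi) phi`_i *: h (n + i)%N = a0 *: h n.
    by rewrite ep (sum_polyC a0 (fun i => h (n + i)%N)) addn0.
  congr (_ + _).
  rewrite [in LHS]eq (sum_polyC b0 (fun j => omega_cover phi (b0%:P) (fun _ => 0) (fun m => h (m + j)%N) n)).
  have -> : (fun m => h (m + 0)%N) = h by apply: functional_extensionality => m; rewrite addn0.
  by rewrite -eq.
have u0 : Q (Eseq 0) 0 = 0 by [].
have u1 : Q (Eseq 0) 1 = a0%:P.
  by rewrite QS u0 /Eseq expr0 scaler0 addr0 alg_polyC.
have u2 : Q (Eseq 0) 2 = (b0 * a0)%:P.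
  by rewrite QS u1 /Eseq expr1 scaler0 add0r -mul_polyC polyCM.
have e : hmul0 (Q (Eseq 0)) (Eseq 0) = Q (Eseq 0).
  by apply: functional_extensionality => m; rewrite hmul0_unitr.
have e' : hmul0 (Eseq 0) (Q (Eseq 0)) = Q (Eseq 0).
  by apply: functional_extensionality => m; rewrite hmul0_unitl.
have H := Hrb (Eseq 0) (Eseq 0) 3.
rewrite e e' hmul0_3 u0 u1 u2 !QS !u0 /Eseq !expr0n /= in H.
rewrite -!mul_polyC in H.
have : (a0 * a0 * b0)%:P *+ 2 == 0.
  apply/eqP; rewrite !polyCM.
  match type of H with ?L = ?R =>
    transitivity (L - R); first by ring
  end.
  by rewrite H subrr.
rewrite -mulr_natr mulf_eq0 polyC_eq0 !mulf_eq0 (negbTE a0nz) /= natr_poly_eq0 // orbF => /eqP hb.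
by rewrite eq hb polyC0.
Qed.

End One.

Section Triple.
Variable k : idomainType.
Local Notation A := {poly k}.

Record T3 : Type := MkT3 { t0 : A; t1 : A; t2 : A }.

Definition to3 (x : T3) : A * A * A := (t0 x, t1 x, t2 x).
Definition of3 (p : A * A * A) : T3 := MkT3 p.1.1 p.1.2 p.2.
Lemma to3K : cancel to3 of3. Proof. by case. Qed.
HB.instance Definition _ := Choice.copy T3 (can_type to3K).

Lemma T3eq (x y : T3) : t0 x = t0 y -> t1 x = t1 y -> t2 x = t2 y -> x = y.
Proof. by case: x y => ? ? ? [? ? ?] /= -> -> ->. Qed.

Definition tzero := MkT3 0 0 0.
Definition topp (x : T3) := MkT3 (- t0 x) (- t1 x) (- t2 x).
Definition tadd (x y : T3) := MkT3 (t0 x + t0 y) (t1 x + t1 y) (t2 x + t2 y).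
Lemma taddA : associative tadd. Proof. by move=> x y z; apply: T3eq => /=; ring. Qed.
Lemma taddC : commutative tadd. Proof. by move=> x y; apply: T3eq => /=; ring. Qed.
Lemma tadd0 : left_id tzero tadd. Proof. by move=> x; apply: T3eq => /=; ring. Qed.
Lemma taddN : left_inverse tzero topp tadd. Proof. by move=> x; apply: T3eq => /=; ring. Qed.
HB.instance Definition _ := GRing.isZmodule.Build T3 taddA taddC tadd0 taddN.

Definition tscale (a : k) (x : T3) := MkT3 (a *: t0 x) (a *: t1 x) (a *: t2 x).
Lemma tscaleA a b v : tscale a (tscale b v) = tscale (a * b) v.
Proof. by apply: T3eq => /=; rewrite scalerA. Qed.
Lemma tscale1 : left_id 1 tscale.
Proof. by move=> v; apply: T3eq => /=; rewrite scale1r. Qed.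
Lemma tscaleDr : right_distributive tscale +%R.
Proof. by move=> a u v; apply: T3eq => /=; rewrite scalerDr. Qed.
Lemma tscaleDl v : {morph tscale^~ v: a b / a + b}.
Proof. by move=> a b; apply: T3eq => /=; rewrite scalerDl. Qed.
HB.instance Definition _ := GRing.Zmodule_isLmodule.Build k T3 tscaleA tscale1 tscaleDr tscaleDl.

Definition tmul (x y : T3) : T3 :=
  MkT3 (t0 x * t0 y) (t0 x * t1 y + t1 x * t0 y)
   (t0 x * t2 y + t1 x * t1 y + t2 x * t0 y).
Definition tone : T3 := MkT3 1 0 0.

Lemma tmulA : associative tmul.
Proof. by move=> x y z; apply: T3eq => /=; ring. Qed.
Lemma tmulC : commutative tmul.
Proof. by move=> x y; apply: T3eq => /=; ring. Qed.
Lemma tmul1 : left_id tone tmul.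
Proof. by move=> x; apply: T3eq => /=; ring. Qed.
Lemma tmulDl : left_distributive tmul +%R.
Proof. by move=> x y z; apply: T3eq => /=; ring. Qed.
Lemma tone_neq0 : tone != 0.
Proof. by apply/eqP => h; have := congr1 t0 h; move/eqP; rewrite oner_eq0. Qed.

HB.instance Definition _ := GRing.Zmodule_isComNzRing.Build T3 tmulA tmulC tmul1 tmulDl tone_neq0.

Lemma tscalerAl (a : k) (u v : T3) : a *: (u * v) = (a *: u) * v.
Proof. by apply: T3eq => /=; rewrite ?scalerDr ?scalerAl. Qed.

HB.instance Definition _ := GRing.Lmodule_isLalgebra.Build k T3 tscalerAl.
HB.instance Definition _ := GRing.Lalgebra_isComAlgebra.Build k T3.

Lemma t0D (x y : T3) : t0 (x + y) = t0 x + t0 y. Proof. by []. Qed.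
Lemma t1D (x y : T3) : t1 (x + y) = t1 x + t1 y. Proof. by []. Qed.
Lemma t2D (x y : T3) : t2 (x + y) = t2 x + t2 y. Proof. by []. Qed.
Lemma t0M (x y : T3) : t0 (x * y) = t0 x * t0 y. Proof. by []. Qed.
Lemma t1M (x y : T3) : t1 (x * y) = t0 x * t1 y + t1 x * t0 y. Proof. by []. Qed.
Lemma t2M (x y : T3) : t2 (x * y) = t0 x * t2 y + t1 x * t1 y + t2 x * t0 y. Proof. by []. Qed.
Lemma t0Z a (x : T3) : t0 (a *: x) = a *: t0 x. Proof. by []. Qed.
Lemma t1Z a (x : T3) : t1 (a *: x) = a *: t1 x. Proof. by []. Qed.
Lemma t2Z a (x : T3) : t2 (a *: x) = a *: t2 x. Proof. by []. Qed.
Lemma t0_1 : t0 (1 : T3) = 1. Proof. by []. Qed.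
Lemma t1_1 : t1 (1 : T3) = 0. Proof. by []. Qed.
Lemma t2_1 : t2 (1 : T3) = 0. Proof. by []. Qed.
Lemma t0_0 : t0 (0 : T3) = 0. Proof. by []. Qed.
Lemma t1_0 : t1 (0 : T3) = 0. Proof. by []. Qed.
Lemma t2_0 : t2 (0 : T3) = 0. Proof. by []. Qed.

Definition P3 (x : T3) : T3 := MkT3 0 (t0 x *+ 2) (t1 x).

Lemma P3_RB : is_RB0 P3.
Proof.
split.
  move=> a x y; apply: T3eq => /=; first by rewrite scaler0 addr0.
    by rewrite !mulr2n scalerDr addrACA.
  by [].
by move=> x y; apply: T3eq => /=; ring.
Qed.

End Triple.

Section GenQE.
Variable (k : idomainType) (R : comAlgType k).
Variables (psi : {poly k}) (P : R -> R).
Local Notation Q := (omega_cover (0 : {poly k}) psi P).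

Lemma QE (nu c : R) (Hnu : forall x, P (nu * x) = nu * P x) n :
  Q (fun m => c * nu ^+ m) n = (peval psi nu) ^+ n * P c.
Proof.
have Hj : forall j x, P (nu ^+ j * x) = nu ^+ j * P x.
  elim=> [|j IH] x; first by rewrite !expr0 !mul1r.
  by rewrite exprS -mulrA Hnu IH mulrA.
elim: n c => [|n IH] c; first by rewrite /= expr0 mulr1 mul1r.
rewrite coverS size_poly0 big_ord0 add0r.
have -> : \sum_(j < size psi) psi`_j *: Q (fun m => c * nu ^+ (m + j)%N) n
   = \sum_(j < size psi) psi`_j *: (nu ^+ j * Q (fun m => c * nu ^+ m) n).
  apply: eq_bigr => j _.
  have -> : (fun m => c * nu ^+ (m + j)%N) = (fun m => nu ^+ j * (c * nu ^+ m)).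
    by apply: functional_extensionality => m; rewrite exprD; ring.
  by rewrite (cover_mulr (Hj j)).
rewrite IH exprS -mulrA; set X := (peval psi nu ^+ n * P c).
rewrite /peval mulr_suml; apply: eq_bigr => j _.
by rewrite scalerAl.
Qed.

End GenQE.

Section ZeroPhi.
Variable k : idomainType.
Hypothesis hchar : [pchar k] =i pred0.
Local Notation A := {poly k}.

Definition emb (a : A) : T3 k := MkT3 a 0 0.

Lemma embM a b : emb a * emb b = emb (a * b).
Proof. by apply: T3eq => /=; ring. Qed.
Lemma embD a b : emb a + emb b = emb (a + b).
Proof. by apply: T3eq => /=; ring. Qed.
Lemma embX a j : emb a ^+ j = emb (a ^+ j).
Proof.
elim: j => [|j IH]; first by rewrite !expr0.
by rewrite !exprS IH embM.
Qed.
Lemma P3emb a x : P3 (emb a * x) = emb a * P3 x.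
Proof. by apply: T3eq => /=; ring. Qed.

Lemma peval_emb (p : A) a : peval p (emb a) = emb (p \Po a).
Proof.
rewrite -peval_comp /peval; apply: T3eq.
- rewrite (big_morph (@t0 k) (@t0D k) (@t0_0 k)) /=.
  by apply: eq_bigr => j _; rewrite embX.
- rewrite (big_morph (@t1 k) (@t1D k) (@t1_0 k)) /= big1 // => j _.
  by rewrite embX /= scaler0.
- rewrite (big_morph (@t2 k) (@t2D k) (@t2_0 k)) /= big1 // => j _.
  by rewrite embX /= scaler0.
Qed.

Variable psi : A.
Local Notation Q := (omega_cover (0 : A) psi (@P3 k)).
Hypothesis Hrb : forall (f g : nat -> T3 k) n,
  hmul0 (Q f) (Q g) n = Q (hmul0 (Q f) g) n + Q (hmul0 f (Q g)) n.

Lemma QEemb (a c : A) :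
  Q (fun m => emb c * emb a ^+ m) = fun m => emb (psi \Po a) ^+ m * P3 (emb c).
Proof.
apply: functional_extensionality => m; rewrite QE ?peval_emb // => x.
exact: P3emb.
Qed.

Lemma emb1 : emb 1 = 1. Proof. by []. Qed.

Lemma zero_identity :
  (psi + (psi \Po 0)) *+ 4 = ((psi \Po psi) + (psi \Po ('X + (psi \Po 0)))) *+ 2.
Proof.
have H := Hrb (Eseq (emb 'X)) (Eseq (emb 0)) 1.
have E : forall a, Eseq (emb a) = fun m => emb 1 * emb a ^+ m.
  by move=> a; apply: functional_extensionality => m; rewrite /Eseq embX embM mul1r.
rewrite !E !QEemb comp_polyXr emb1 in H.
set P1 := P3 1 in H.
have e1 : hmul0 (fun m => emb psi ^+ m * P1) (fun m => 1 * emb 0 ^+ m)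
   = fun m => P1 * emb psi ^+ m.
  apply: functional_extensionality => m.
  have -> : (fun m => emb psi ^+ m * P1) = (fun m => P1 * emb psi ^+ m).
    by apply: functional_extensionality => i; rewrite mulrC.
  by rewrite hmul0Ml hmul0Mr (hmul0E (emb psi) (emb 0)) embD addr0 mul1r.
have e2 : hmul0 (fun m => 1 * emb 'X ^+ m) (fun m => emb (psi \Po 0) ^+ m * P1)
   = fun m => P1 * emb ('X + (psi \Po 0)) ^+ m.
  apply: functional_extensionality => m.
  have -> : (fun m => emb (psi \Po 0) ^+ m * P1) = (fun m => P1 * emb (psi \Po 0) ^+ m).
    by apply: functional_extensionality => i; rewrite mulrC.
  by rewrite hmul0Ml hmul0Mr (hmul0E (emb 'X) (emb (psi \Po 0))) embD mul1r.
rewrite e1 e2 !QE ?peval_emb ?expr1 in H; try by move=> x; exact: P3emb.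
rewrite hmul0_1 !expr0 !expr1 !mul1r in H.
have := congr1 (@t2 k) H.
rewrite /= => e.
match type of e with ?L = ?R => transitivity L; [ring | rewrite e; ring] end.
Qed.

Lemma size2E' (p : A) : (size p <= 2)%N -> p = (p`_0)%:P + (p`_1)%:P * 'X.
Proof.
move=> hs; apply/polyP => i; rewrite coefD coefC coefCM coefX.
case: i => [|[|i]] /=; first by rewrite mulr0 addr0.
  by rewrite mulr1 add0r.
by rewrite mulr0 addr0 nth_default //; apply: leq_trans hs _.
Qed.

Lemma case_zero : in_T0 0 psi.
Proof.
have E0 := zero_identity.
rewrite comp_poly0r in E0; set c := psi`_0 in E0.
have E : (psi + c%:P) *+ 2 = psi \Po psi + (psi \Po ('X + c%:P)).
  apply/eqP; rewrite -subr_eq0; apply/eqP.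
  have : ((psi + c%:P) *+ 2 - (psi \Po psi + (psi \Po ('X + c%:P)))) * 2%:R = 0.
    rewrite mulrBl !mulr_natr -mulrnA E0 subrr //.
  by move/eqP; rewrite mulf_eq0 natr_poly_eq0 // orbF => /eqP.
case: (leqP (size psi) 2) => hs.
- have ep := size2E' hs; rewrite -/c in ep; set b1 := psi`_1 in ep.
  have hpp : psi \Po psi = c%:P + b1%:P * psi.
    transitivity ((c%:P + b1%:P * 'X) \Po psi); first by rewrite -ep.
    by rewrite comp_polyD comp_polyM !comp_polyC comp_polyX.
  have hpx : psi \Po ('X + c%:P) = c%:P + b1%:P * ('X + c%:P).
    transitivity ((c%:P + b1%:P * 'X) \Po ('X + c%:P)); first by rewrite -ep.
    by rewrite comp_polyD comp_polyM !comp_polyC comp_polyX.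
  rewrite hpp hpx !ep in E.
  have c1 := congr1 (fun q : A => q`_1) E.
  have c0 := congr1 (fun q : A => q`_0) E.
  rewrite /= !coefMn !coefD !coefCM !coefD !coefC !coefX /= in c1 c0.
  rewrite !coefCM !coefX /= in c1 c0.
  have : b1 * (b1 - 1) == 0.
    apply/eqP; move: c1; rewrite mulr2n => c1.
    transitivity ((0 + b1 * (0 + b1 * 1) + (0 + b1 * (1 + 0))) - (0 + b1 * 1 + 0 + (0 + b1 * 1 + 0))); first by ring.
    by rewrite -c1 subrr.
  rewrite mulf_eq0 subr_eq0 => /orP [/eqP hb1|/eqP hb1].
  + have : c *+ 2 == 0.
      apply/eqP; move: c0; rewrite hb1 => c0.
      transitivity ((c + 0 * 0 + c) *+ 2 - (c + 0 * (c + 0 * 0) + (c + 0 * (0 + c)))); first by ring.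
      by rewrite c0 subrr.
    rewrite -mulr_natr mulf_eq0 natr_k_eq0 // orbF => /eqP hc.
    left; exists 0; split; first by rewrite polyC0.
    by rewrite ep hb1 hc !polyC0 mul0r addr0.
  + right; exists c; split => //.
    by rewrite ep hb1 polyC1 mul1r.
- exfalso.
  have hc : psi \Po ('X + c%:P) = psi \Po ('X + c%:P) by [].
  have s1 := size_comp_poly psi psi.
  have s2 : size (psi \Po ('X + c%:P)) = size psi by apply: size_comp_poly2; rewrite size_XaddC.
  have s3 : (size ((psi + c%:P) *+ 2) <= size psi)%N.
    rewrite mulr2n; apply: leq_trans (size_polyD _ _) _; rewrite geq_max andbb.
    apply: leq_trans (size_polyD _ _) _; rewrite geq_max leqnn /=.
    by apply: leq_trans (size_polyC_leq1 _) _; apply: leq_trans hs.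
  have e4 : psi \Po psi = (psi + c%:P) *+ 2 - (psi \Po ('X + c%:P)) by rewrite E; ring.
  have s4 : (size (psi \Po psi) <= size psi)%N.
    rewrite e4; apply: leq_trans (size_polyD _ _) _; rewrite geq_max s3 size_polyN s2 leqnn //.
  move: s1 s4 hs; set e := size (psi \Po psi); set sp := size psi.
  rewrite -!subn1; nia.
Qed.

End ZeroPhi.

Unset Implicit Arguments.

Theorem theorem3p1 (k : idomainType) (hchar : [pchar k] =i pred0)
    (phi psi : {poly k}) :
  (forall (R : comAlgType k) (P : R -> R),
      is_RB0 P -> is_RB0_hurwitz (omega_cover phi psi P))
  <-> in_T0 phi psi.
Proof.
split.
- move=> Hall.
  have RB0 : is_RB0 (fun _ : {poly k} => (0 : {poly k})).
    by split => [a x y|x y] /=; rewrite ?scaler0 ?addr0 ?mulr0.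
  have Hrb0 := (Hall {poly k} (fun _ => 0) RB0).2.
  case: (ltnP 1 (size phi)) => hp.
    by exfalso; apply: (case_big hchar Hrb0 hp).
  case: (posnP (size phi)) => h0.
    have e : phi = 0 by apply/eqP; rewrite -size_poly_eq0 h0.
    subst phi.
    exact: (case_zero hchar (Hall (T3 k) (@P3 k) (@P3_RB k)).2).
  have h1 : size phi = 1 by apply/eqP; rewrite eqn_leq hp h0.
  left; exists phi`_0; split; first by apply: size1_polyC; rewrite h1.
  exact: (case_one hchar Hrb0 h1).
- case => [[a0 [-> ->]] | [b0 [-> ->]]] R P HP.
    exact: case1.
  exact: case2.
Qed.
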